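(* For $n\geq1$ let $\ell_n=\sqrt[n]{n!}$ and $x_n=\log(\ell_{n+1}/\ell_n)$. Then for every integer $n\geq 1$, $$x_n\geq \frac1n-\frac{\log n}{2n(n+1)}-\frac{\log(2\pi)}{2n(n+1)}-\frac{85}{144n^3}-\frac{49}{144n^4}\geq \frac1n-\frac{\log n}{2n(n+1)}-\frac{\log(2\pi)}{2n(n+1)}-\frac{1}{n^3}.$$
   Context: $\log$ denotes the natural logarithm. *)

(* Defs.v *)
From Stdlib Require Import Reals Arith Factorial.
Open Scope R_scope.

Definition ell (n : nat) : R := Rpower (INR (fact n)) (/ INR n).

Definition xseq (n : nat) : R := ln (ell (S n) / ell n).

(* Main.v *)
Require Import Defs.
From Stdlib Require Import Reals Lra.
From Coquelicot Require Import Coquelicot.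
Open Scope R_scope.
From Stdlib Require Import Lia Arith Factorial.
Definition W k : R := RInt (fun x => sin x ^ k) 0 (PI/2).
Lemma W_ex k : ex_RInt (fun x => sin x ^ k) 0 (PI/2).
Proof. apply (ex_RInt_continuous (V:=R_CompleteNormedModule)). intros z _.
apply (ex_derive_continuous (K:=R_AbsRing) (V:=R_NormedModule)). auto_derive. trivial. Qed.
Lemma W_rec k : W (S (S k)) = INR (S k) / INR (S (S k)) * W k.
Proof.
assert (H1 : is_RInt (fun x => INR (S (S k)) * sin x ^ (S (S k)) - INR (S k) * sin x ^ k) 0 (PI/2)
   (minus ((fun x => - cos x * sin x ^ (S k)) (PI/2)) ((fun x => - cos x * sin x ^ (S k)) 0))).
{ apply (is_RInt_derive (V:=R_CompleteNormedModule) (fun x => - cos x * sin x ^ (S k))).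
  - intros x _. auto_derive. trivial.
    change (match k with 0%nat => 1 | S _ => INR k + 1 end) with (INR (S k)).
    assert (E: INR (S k) * sin x ^ k * (cos x * cos x + sin x * sin x - 1) = 0).
    { rewrite <- (sin2_cos2 x). unfold Rsqr. ring. }
    rewrite !S_INR in *. simpl. nra.
  - intros x _. apply (ex_derive_continuous (K:=R_AbsRing) (V:=R_NormedModule)). auto_derive. trivial. }
assert (H2 := is_RInt_plus _ _ _ _ _ _ H1 (is_RInt_scal _ _ _ (INR (S k)) _ (RInt_correct _ _ _ (W_ex k)))).
assert (H3 := is_RInt_scal _ _ _ (/ INR (S (S k))) _ H2).
unfold W. apply is_RInt_unique.
replace (INR (S k) / INR (S (S k)) * RInt (fun x : R => sin x ^ k) 0 (PI / 2)) with
  (scal (/ INR (S (S k)))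
       (plus (minus ((fun x => - cos x * sin x ^ (S k)) (PI/2)) ((fun x => - cos x * sin x ^ (S k)) 0))
          (scal (INR (S k)) (RInt (fun x : R => sin x ^ k) 0 (PI / 2))))).
2:{ cbv beta. rewrite cos_PI2, sin_0. rewrite !S_INR. unfold minus, plus, opp, scal; simpl. unfold mult; simpl. field.
    pose proof (pos_INR k); lra. }
eapply is_RInt_ext; [| exact H3 ].
intros x _. rewrite !S_INR. unfold minus, plus, opp, scal; simpl. unfold mult; simpl. field.
pose proof (pos_INR k); lra.
Qed.
Lemma nonneg_deriv (f df : R -> R) (b : R) : 0 <= b ->
  (forall x, 0 <= x <= b -> is_derive f x (df x)) ->
  (forall x, 0 <= x <= b -> 0 <= df x) -> f 0 <= f b.
Proof.
intros Hb Hd Hp.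
destruct (MVT_gen f 0 b df) as [c [Hc Heq]].
- intros x Hx. rewrite Rmin_left in Hx by lra. rewrite Rmax_right in Hx by lra. apply Hd; lra.
- intros x Hx. rewrite Rmin_left in Hx by lra. rewrite Rmax_right in Hx by lra.
  apply continuity_pt_filterlim. apply (ex_derive_continuous (K:=R_AbsRing) (V:=R_NormedModule) f x). exists (df x). apply Hd; lra.
- rewrite Rmin_left in Hc by lra. rewrite Rmax_right in Hc by lra.
  assert (0 <= df c * (b - 0)) by (apply Rmult_le_pos; [apply Hp; lra| lra]). lra.
Qed.

Lemma f_ineq x : 0 <= x < 1 -> 2 * x <= ln (1 + x) - ln (1 - x).
Proof.
intros Hx.
set (f := fun y => ln (1 + y) - ln (1 - y) - 2 * y).
assert (H : f 0 <= f x).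
{ apply nonneg_deriv with (df := fun y => 2 * y^2 / (1 - y^2)). lra.
  - intros y Hy. unfold f. auto_derive. lra. field. split; nra.
  - intros y Hy. unfold Rdiv. apply Rmult_le_pos; [nra | left; apply Rinv_0_lt_compat; nra]. }
unfold f in H. rewrite Rplus_0_r, Rminus_0_r, ln_1 in H. lra.
Qed.

Lemma g_ineq x : 0 <= x < 1 -> ln (1 + x) - ln (1 - x) <= 2 * x + 2 * x^3 / (3 * (1 - x^2)).
Proof.
intros Hx.
set (g := fun y => 2 * y + 2 * y^3 / (3 * (1 - y^2)) - (ln (1 + y) - ln (1 - y))).
assert (H : g 0 <= g x).
{ apply nonneg_deriv with (df := fun y => 4 * y^4 / (3 * (1 - y^2)^2)). lra.
  - intros y Hy. unfold g. auto_derive. repeat split; nra. field. split; nra.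
  - intros y Hy. assert (0 < 1 - y^2) by nra. unfold Rdiv. apply Rmult_le_pos; [nra | left; apply Rinv_0_lt_compat; apply Rmult_lt_0_compat; [lra|apply pow_lt; lra]]. }
unfold g in H. rewrite Rplus_0_r, Rminus_0_r, ln_1 in H.
replace (2 * 0 + 2 * 0 ^ 3 / (3 * (1 - 0 ^ 2)) - (0 - 0)) with 0 in H by field. lra.
Qed.
Lemma lnD x y : 0 < x -> 0 < y -> ln (x / y) = ln x - ln y.
Proof. intros. unfold Rdiv. rewrite ln_mult, ln_Rinv; try lra. apply Rinv_0_lt_compat; lra. Qed.

Lemma lnle x y : 0 < x -> x <= y -> ln x <= ln y.
Proof. intros Hx [H|H]. left; apply ln_increasing; lra. subst; lra. Qed.

Lemma ln1p y : 0 < y -> ln (1 + y) <= y.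
Proof. intros. assert (1 + y < exp y) by (apply exp_ineq1; lra).
rewrite <- (ln_exp y) at 2. apply lnle; lra. Qed.

Lemma W0 : W 0 = PI / 2.
Proof. unfold W. simpl. rewrite RInt_const. unfold scal; simpl. unfold mult; simpl. ring. Qed.

Lemma W1 : W 1 = 1.
Proof.
unfold W. apply is_RInt_unique.
assert (H := is_RInt_derive (V:=R_CompleteNormedModule) (fun x => - cos x) (fun x => sin x ^ 1) 0 (PI/2)).
replace 1 with (minus ((fun x => - cos x) (PI/2)) ((fun x => - cos x) 0)).
apply H.
- intros x _. auto_derive. trivial. ring.
- intros x _. apply (ex_derive_continuous (K:=R_AbsRing) (V:=R_NormedModule)). auto_derive. trivial.
- cbv beta. rewrite cos_PI2, cos_0. unfold minus, plus, opp; simpl. ring.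
Qed.

Lemma W_mono k : W (S k) <= W k.
Proof.
unfold W. apply RInt_le; try apply W_ex.
- pose proof PI_RGT_0. lra.
- intros x Hx. pose proof PI_RGT_0.
  assert (0 <= sin x) by (apply sin_ge_0; lra).
  assert (sin x <= 1) by (apply SIN_bound).
  assert (0 <= sin x ^ k) by (apply pow_le; lra).
  simpl. nra.
Qed.

Lemma W_prod k : INR (S k) * W k * W (S k) = PI / 2.
Proof.
induction k.
- rewrite W0, W1. simpl. ring.
- rewrite W_rec. rewrite <- IHk. field. rewrite !S_INR. pose proof (pos_INR k). lra.
Qed.

Lemma fact_S_INR n : INR (fact (S n)) = INR (S n) * INR (fact n).
Proof. rewrite <- mult_INR. reflexivity. Qed.

Lemma W_odd m : W (2 * m + 1) = 4 ^ m * INR (fact m) ^ 2 / INR (fact (2 * m + 1)).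
Proof.
induction m.
- simpl. rewrite W1. field.
- replace (2 * S m + 1)%nat with (S (S (2 * m + 1))) by lia.
  rewrite W_rec, IHm. rewrite !fact_S_INR.
  pose proof (INR_fact_lt_0 m). pose proof (INR_fact_lt_0 (2*m+1)).
  replace (INR (S (S (2 * m + 1)))) with (2 * INR m + 3) by (rewrite !S_INR, plus_INR, mult_INR; simpl; ring).
  replace (INR (S (2 * m + 1))) with (2 * INR m + 2) by (rewrite !S_INR, plus_INR, mult_INR; simpl; ring).
  rewrite S_INR. simpl pow. pose proof (pos_INR m).
  set (F := INR (fact (2 * m + 1))) in *. set (A := INR (fact m)) in *. set (M := INR m) in *. set (Q := 4 ^ m) in *. field. lra.
Qed.

Definition L n := ln (INR (fact n)).
Definition d n := L n - (INR n + / 2) * ln (INR n) + INR n.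

Lemma L_S n : L (S n) = L n + ln (INR n + 1).
Proof. unfold L. rewrite fact_S_INR, ln_mult. rewrite S_INR; lra.
  apply lt_0_INR; lia. apply INR_fact_lt_0. Qed.

Lemma s_bounds N : 1 <= N -> 0 <= 1 / (2 * N + 1) < 1.
Proof. intros. assert (0 < 1 / (2 * N + 1)) by (apply Rdiv_lt_0_compat; lra).
  assert (1 / (2 * N + 1) < 1). { unfold Rdiv. rewrite Rmult_1_l. rewrite <- Rinv_1 at 2.
    apply Rinv_lt_contravar; lra. } lra. Qed.

Lemma D_id N : 1 <= N -> let s := 1 / (2 * N + 1) in
  ln (N + 1) - ln N = ln (1 + s) - ln (1 - s).
Proof.
intros HN s. pose proof (s_bounds N HN). fold s in H. rewrite <- !lnD; try lra.
f_equal. unfold s. field. lra.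
Qed.

Lemma D_lo N : 1 <= N -> 2 / (2 * N + 1) <= ln (N + 1) - ln N.
Proof. intros HN. rewrite D_id by lra. pose proof (f_ineq _ (s_bounds N HN)).
  replace (2 / (2 * N + 1)) with (2 * (1 / (2 * N + 1))) by (field; lra). lra. Qed.

Lemma D_hi N : 1 <= N -> (N + / 2) * (ln (N + 1) - ln N) - 1 <= 1 / (12 * N * (N + 1)).
Proof. intros HN. rewrite D_id by lra. pose proof (g_ineq _ (s_bounds N HN)) as H.
  set (s := 1 / (2 * N + 1)) in *.
  assert (E : (N + / 2) * (2 * s + 2 * s ^ 3 / (3 * (1 - s ^ 2))) = 1 + 1 / (12 * N * (N + 1))).
  { unfold s. field. repeat split; nra. }
  assert ((N + / 2) * (ln (1 + s) - ln (1 - s)) <= (N + / 2) * (2 * s + 2 * s ^ 3 / (3 * (1 - s ^ 2)))).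
  { apply Rmult_le_compat_l; lra. }
  lra.
Qed.

Lemma d_step n : (1 <= n)%nat ->
  d n - d (S n) = (INR n + / 2) * (ln (INR n + 1) - ln (INR n)) - 1.
Proof. intros. unfold d. rewrite L_S, S_INR. ring. Qed.

Lemma INR_ge1 n : (1 <= n)%nat -> 1 <= INR n.
Proof. intros. apply (le_INR 1). auto. Qed.

Lemma d_dec n : (1 <= n)%nat -> d (S n) <= d n.
Proof. intros Hn. pose proof (d_step n Hn). pose proof (INR_ge1 n Hn).
  pose proof (D_lo (INR n) H0).
  assert ((INR n + /2) * (2 / (2 * INR n + 1)) = 1) by (field; lra).
  assert ((INR n + /2) * (2 / (2 * INR n + 1)) <= (INR n + /2) * (ln (INR n + 1) - ln (INR n))).
  { apply Rmult_le_compat_l; lra. } lra. Qed.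

Lemma e_inc n : (1 <= n)%nat -> d n - 1 / (12 * INR n) <= d (S n) - 1 / (12 * INR (S n)).
Proof. intros Hn. pose proof (d_step n Hn). pose proof (INR_ge1 n Hn).
  pose proof (D_hi (INR n) H0). rewrite S_INR.
  assert (1 / (12 * INR n * (INR n + 1)) = 1 / (12 * INR n) - 1 / (12 * (INR n + 1))) by (field; lra).
  lra. Qed.

Lemma d_dec_k n k : (1 <= n)%nat -> d (n + k) <= d n.
Proof. intros Hn. induction k. rewrite Nat.add_0_r; lra.
  rewrite Nat.add_succ_r. pose proof (d_dec (n + k) ltac:(lia)). lra. Qed.

Lemma e_inc_k n k : (1 <= n)%nat -> d n - 1 / (12 * INR n) <= d (n + k) - 1 / (12 * INR (n + k)).
Proof. intros Hn. induction k. rewrite Nat.add_0_r; lra.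
  rewrite Nat.add_succ_r. pose proof (e_inc (n + k) ltac:(lia)). lra. Qed.

Lemma wallis_d m : (1 <= m)%nat -> 2 * d m <= ln (2 * PI) + 1 / (2 * INR m).
Proof.
intros Hm. pose proof (INR_ge1 m Hm) as HM.
pose proof PI_RGT_0 as HPI.
pose proof (W_prod (2 * m)) as Hp.
pose proof (W_mono (2 * m)) as Hmono.
replace (S (2 * m)) with (2 * m + 1)%nat in Hp, Hmono by lia.
rewrite W_odd in Hp, Hmono.
set (A := INR (fact m)) in *. set (C := INR (fact (2 * m + 1))) in *.
assert (HA : 0 < A) by apply INR_fact_lt_0. assert (HC : 0 < C) by apply INR_fact_lt_0.
assert (H4 : 0 < 4 ^ m) by (apply pow_lt; lra).
set (w := 4 ^ m * A ^ 2 / C) in *.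
assert (Hw : 0 < w) by (unfold w; apply Rdiv_lt_0_compat; [apply Rmult_lt_0_compat; [lra| apply pow_lt; lra] | lra]).
replace (INR (2 * m + 1)) with (2 * INR m + 1) in Hp by (rewrite plus_INR, mult_INR; simpl; ring).
assert (Hsq : w * w <= PI / (2 * (2 * INR m + 1))).
{ assert (W (2 * m) * w = PI / (2 * (2 * INR m + 1))).
  { replace (W (2*m) * w) with ((2 * INR m + 1) * W (2 * m) * w / (2 * INR m + 1)) by (field; lra).
    rewrite Hp. field. lra. }
  assert (w * w <= W (2 * m) * w) by (apply Rmult_le_compat_r; lra). lra. }
apply lnle in Hsq; [| nra].
rewrite ln_mult in Hsq by lra. rewrite lnD in Hsq by lra. rewrite ln_mult in Hsq by lra.
unfold w in Hsq. rewrite lnD, ln_mult, ln_pow, ln_pow in Hsq by (try apply Rmult_lt_0_compat; try apply pow_lt; lra).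
replace (ln 4) with (2 * ln 2) in Hsq by (replace 4 with (2 * 2) by ring; rewrite ln_mult; lra).
assert (LC : ln C = L (2 * m) + ln (2 * INR m + 1)).
{ unfold C. replace (2 * m + 1)%nat with (S (2 * m)) by lia. fold (L (S (2 * m))). rewrite L_S, mult_INR. simpl. ring_simplify. reflexivity. }
rewrite LC in Hsq. fold (L m) in Hsq.
unfold A in Hsq. fold (L m) in Hsq.
replace (INR 2) with 2 in Hsq by (simpl; ring).
assert (Hd2 : d (2 * m) = L (2 * m) - (2 * INR m + / 2) * (ln 2 + ln (INR m)) + 2 * INR m).
{ unfold d. rewrite mult_INR. replace (INR 2) with 2 by (simpl; ring). rewrite ln_mult by lra. ring. }
assert (Hdd : d (2 * m) <= d m).
{ replace (2 * m)%nat with (m + m)%nat by lia. apply d_dec_k; auto. }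
assert (Hl : ln (2 * INR m + 1) <= ln 2 + ln (INR m) + 1 / (2 * INR m)).
{ assert (0 < 1 / (2 * INR m)) by (apply Rdiv_lt_0_compat; lra).
  replace (2 * INR m + 1) with (2 * INR m * (1 + 1 / (2 * INR m))) by (field; lra).
  rewrite !ln_mult; try lra. pose proof (ln1p (1 / (2 * INR m)) H). lra. }
rewrite ln_mult by lra.
rewrite Hd2 in Hdd. unfold d in Hdd |- *.
lra.
Qed.

Lemma d_bound n : (1 <= n)%nat -> d n <= / 2 * ln (2 * PI) + 1 / (12 * INR n).
Proof.
intros Hn. destruct (Rle_or_lt (d n) (/ 2 * ln (2 * PI) + 1 / (12 * INR n))) as [H|H]; auto.
exfalso. pose proof (INR_ge1 n Hn).
set (eps := d n - 1 / (12 * INR n) - / 2 * ln (2 * PI)).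
assert (Heps : 0 < eps) by (unfold eps; lra).
destruct (archimed_cor1 eps Heps) as [K [HK HK0]].
pose proof (e_inc_k n K Hn) as H1. pose proof (wallis_d (n + K) ltac:(lia)) as H2.
set (M := INR (n + K)) in *.
assert (HKp : 0 < INR K) by (apply lt_0_INR; lia).
assert (HM : INR K <= M) by (unfold M; rewrite plus_INR; pose proof (pos_INR n); lra).
assert (H3 : 1 / (2 * M) <= / INR K).
{ unfold Rdiv. rewrite Rmult_1_l. apply Rle_trans with (/ M).
  apply Rinv_le_contravar; lra. apply Rinv_le_contravar; lra. }
assert (H4 : 0 < 1 / (12 * M)) by (apply Rdiv_lt_0_compat; lra).
unfold eps in *. lra.
Qed.

Theorem mainTheorem7 : forall n : nat, (1 <= n)%nat ->
  let N := INR n in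
  xseq n >= 1 / N - ln N / (2 * N * (N + 1)) - ln (2 * PI) / (2 * N * (N + 1))
             - 85 / (144 * N ^ 3) - 49 / (144 * N ^ 4)
  /\
  1 / N - ln N / (2 * N * (N + 1)) - ln (2 * PI) / (2 * N * (N + 1))
             - 85 / (144 * N ^ 3) - 49 / (144 * N ^ 4)
  >= 1 / N - ln N / (2 * N * (N + 1)) - ln (2 * PI) / (2 * N * (N + 1))
             - 1 / N ^ 3.
Proof.
intros n Hn N.
assert (HN : 1 <= N) by (apply INR_ge1; auto).
assert (Hx : xseq n = / (N + 1) * (L n + ln (N + 1)) - / N * L n).
{ unfold xseq, ell, Rpower. rewrite lnD by apply exp_pos. rewrite !ln_exp.
  fold (L (S n)) (L n). rewrite L_S, S_INR. reflexivity. }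
split.
- rewrite Hx. pose proof (D_lo N HN) as HD. pose proof (d_bound n Hn) as Hb. fold N in Hb.
  set (D := ln (N + 1) - ln N) in HD.
  replace (ln (N + 1)) with (ln N + D) by (unfold D; ring).
  unfold d in Hb. fold N in Hb.
  set (U := / 2 * ln (2 * PI) + 1 / (12 * N) - (L n - (N + / 2) * ln N + N)).
  assert (HU : 0 <= U) by (unfold U; lra).
  replace (L n) with ((N + / 2) * ln N - N + / 2 * ln (2 * PI) + 1 / (12 * N) - U) by (unfold U; ring).
  set (P := (2 * N ^ 3 + 341 * N ^ 2 + 232 * N + 49) / (144 * N ^ 4 * (N + 1) * (2 * N + 1))).
  match goal with |- ?a >= ?b => assert (Key : a - b = (D - 2 / (2 * N + 1)) / (N + 1) + U / (N * (N + 1)) + P) end.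
  { unfold P. field. lra. }
  assert (0 <= (D - 2 / (2 * N + 1)) / (N + 1)) by (apply Rmult_le_pos; [lra | left; apply Rinv_0_lt_compat; lra]).
  assert (0 <= U / (N * (N + 1))) by (apply Rmult_le_pos; [lra | left; apply Rinv_0_lt_compat; nra]).
  assert (0 <= P).
  { unfold P. apply Rmult_le_pos. nra. left; apply Rinv_0_lt_compat.
    repeat apply Rmult_lt_0_compat; try lra; apply pow_lt; lra. }
  lra.
- assert (85 / (144 * N ^ 3) + 49 / (144 * N ^ 4) <= 1 / N ^ 3).
  { assert (0 < N ^ 3) by (apply pow_lt; lra).
    replace (85 / (144 * N ^ 3) + 49 / (144 * N ^ 4)) with ((85 * N + 49) / 144 * (1 / N ^ 4)) by (field; lra).
    replace (1 / N ^ 3) with (N * (1 / N ^ 4)) by (field; lra).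
    apply Rmult_le_compat_r. left. apply Rdiv_lt_0_compat; [lra | apply pow_lt; lra]. lra. }
  lra.
Qed.
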